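(* Let $\rho$ be a positive integer and $v$ an integer with $v \ge \frac{1}{2}(27\rho^2 - 3\rho + 60)$. Then every $(v,4)$-packing in which the maximum partial parallel class has size $\rho$ has at most \[ \frac{\rho v}{3} - \frac{\rho(\rho+1)}{6} \] blocks.
   Context: For integers $v \ge k \ge 2$, a $(v,k)$-packing is a pair $(X,\mathcal{B})$ where $X$ is a set of $v$ points and $\mathcal{B}$ is a set of $k$-subsets of $X$ (blocks) such that every pair of distinct points lies in at most one block. A partial parallel class (PPC) is a set of pairwise disjoint blocks; its size is the number of blocks. ''The maximum PPC has size $\rho$'' means the packing has a PPC of size $\rho$ but none of size $\rho+1$. *)

(* Defs.v *)
From mathcomp Require Import all_boot all_order all_algebra.
Set Implicit Arguments. Unset Strict Implicit. Unset Printing Implicit Defensive.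

Definition is_packing (v k : nat) (B : {set {set 'I_v}}) : Prop :=
  (forall b, b \in B -> #|b| = k) /\
  (forall x y : 'I_v, x != y ->
     #|[set b in B | (x \in b) && (y \in b)]| <= 1).

Definition is_PPC (v : nat) (B P : {set {set 'I_v}}) : Prop :=
  P \subset B /\
  (forall b1 b2, b1 \in P -> b2 \in P -> b1 != b2 -> [disjoint b1 & b2]).

Definition max_PPC_size (v : nat) (B : {set {set 'I_v}}) (rho : nat) : Prop :=
  (exists P, is_PPC B P /\ #|P| = rho) /\
  ~ (exists P, is_PPC B P /\ #|P| = rho.+1).

(* Main.v *)
Require Import Defs.
From mathcomp Require Import all_boot all_order all_algebra.
From mathcomp Require Import zify ring lra.
Import GRing.Theory Num.Theory.
Set Implicit Arguments. Unset Strict Implicit. Unset Printing Implicit Defensive.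

Lemma disjP (T : finType) (A B : {set T}) :
  reflect (forall x, x \in A -> x \in B -> False) [disjoint A & B].
Proof.
apply: (iffP pred0P) => [H x xA xB|H x /=]; first by have := H x; rewrite /= xA xB.
by apply/negbTE/andP => -[/H].
Qed.

Lemma card_pairs (T1 T2 : finType) (A : {set T1}) (F : T1 -> {set T2}) :
  #|[set p : T1 * T2 | (p.1 \in A) && (p.2 \in F p.1)]| = \sum_(a in A) #|F a|.
Proof.
rewrite -sum1dep_card -(pair_big_dep (fun a => a \in A) (fun a b => b \in F a) (fun _ _ => 1)) /=.
by apply: eq_bigr => a _; rewrite sum1_card.
Qed.

Lemma half_pairs (T : finType) (S W : {set T * T}) :
  S \subset W -> (forall x y, (x, y) \in W -> (y, x) \in W) ->
  (forall x y, (x, y) \in S -> (y, x) \in S -> False) -> 2 * #|S| <= #|W|.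
Proof.
move=> SW Wsw Sno.
pose sw := fun p : T * T => (p.2, p.1).
have swinj : injective sw by case=> a b [c d] [-> ->].
have c1 : #|sw @: S| = #|S| by rewrite card_imset.
have dj : [disjoint S & sw @: S].
  apply/disjP => -[x y] xyS /imsetP [[a b] abS] /= [xe ye]; subst; exact: (Sno a b).
have : #|S :|: sw @: S| <= #|W|.
  apply: subset_leq_card; apply/subsetP => p; rewrite inE => /orP [/(subsetP SW)//|].
  by case/imsetP => -[a b] /(subsetP SW) abW ->; apply: Wsw.
rewrite cardsU (disjoint_setI0 dj) cards0 c1; lia.
Qed.

Lemma ndisjP (T : finType) (A B : {set T}) :
  reflect (exists2 x, x \in A & x \in B) (~~ [disjoint A & B]).
Proof.
rewrite -setI_eq0; apply: (iffP (set0Pn _)) => [[x /setIP [xA xB]]|[x xA xB]].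
  by exists x.
by exists x; apply/setIP.
Qed.

Lemma ar_a (b : bool) n : 13 < b + n -> 13 <= n. Proof. case: b => /=; lia. Qed.
Lemma ar_b x n : true + x = n.+1 -> x = n. Proof. simpl; lia. Qed.
Lemma ar_c n m : true + m <= 4 -> n <= m -> n <= 3. Proof. simpl; lia. Qed.
Lemma ar_d a b c n : n <= 3 -> b <= 3 * n -> a <= 3 -> a + b - c <= 12. Proof. lia. Qed.
Lemma ar_e a b k : k <= 12 -> b <= k -> 13 <= a -> 0 < a - b. Proof. lia. Qed.
Lemma ar_f a b c n : b <= 3 * n -> a <= 3 -> a + b - c <= 3 * n.+1. Proof. lia. Qed.
Lemma ar_g n : 0 < n -> 4 - n <= 3. Proof. lia. Qed.
Lemma ar_h a s h2 o : a + (h2 - s) <= o -> 2 * s <= h2 -> 2 * a + h2 <= 2 * o. Proof. lia. Qed.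
Lemma ar_i x : 4 = true + x -> x = 3. Proof. simpl; lia. Qed.
Lemma aux r : 0 < r -> 74 * r + 6 <= 27 * r ^ 2 - 3 * r + 60.
Proof. move=> r0; case: r r0 => [//|[|r]] _; [by []| nia]. Qed.
Lemma ar_lin a l c kv sv ks kk ss k s :
  6 * a + (kk - k) <= 2 * (kv - k) -> l <= 13 * s ->
  2 * c <= 2 * (4 * (3 * ks)) + 4 * (4 * ss - 4 * s) ->
  74 * ks + 49 * ss + 31 * s <= 2 * sv -> k <= kk -> k <= kv -> s <= ss ->
  6 * (a + l + c) + (kk + 2 * ks + ss + k + s) <= 2 * kv + 2 * sv.
Proof. lia. Qed.
Lemma ar_final k s v a l c : 6 * a + k * (k - 1) <= 2 * (k * (v - 1)) -> l <= 13 * s ->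
  2 * c <= 2 * (4 * s * (4 * k - k)) + 4 * s * (4 * s - 4) ->
  27 * (k + s) ^ 2 - 3 * (k + s) + 60 <= 2 * v -> 0 < k + s ->
  6 * (a + l + c) + (k + s) * (k + s + 1) <= 2 * (k + s) * v.
Proof.
move=> h1 h2 h3 h4 h5.
have h6 := aux h5.
have h7 : s * (74 * k + 49 * s + 31) <= s * (2 * v).
  case: s h4 h5 h6 {h2 h3} => [|s] h4 h5 h6; first by rewrite !mul0n.
  rewrite leq_mul2l /=; lia.
have v1 : 1 <= v by lia.
have kk : k <= k * k by case: (k) => // k'; rewrite leq_pmulr.
have ss : s <= s * s by case: (s) => // s'; rewrite leq_pmulr.
have E1 : k * (k - 1) = k * k - k by rewrite mulnBr muln1.
have E2 : k * (v - 1) = k * v - k by rewrite mulnBr muln1.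
have E3 : 4 * s * (4 * k - k) = 4 * (3 * (k * s)).
  have -> : 4 * k - k = 3 * k by lia.
  ring.
have E4 : 4 * s * (4 * s - 4) = 4 * (4 * (s * s) - 4 * s).
  rewrite -mulnA !mulnBr; congr (_ - _); ring.
have E5 : s * (74 * k + 49 * s + 31) = 74 * (k * s) + 49 * (s * s) + 31 * s by ring.
have E6 : s * (2 * v) = 2 * (s * v) by ring.
have E7 : (k + s) * (k + s + 1) = k * k + 2 * (k * s) + s * s + k + s by ring.
have E8 : 2 * (k + s) * v = 2 * (k * v) + 2 * (s * v) by ring.
rewrite E1 E2 in h1; rewrite E3 E4 in h3; rewrite E5 E6 in h7; rewrite E7 E8.
apply: ar_lin => //.
- by rewrite leq_pmulr.
Qed.
Lemma ar_j c a s t : c <= a + s -> 2 * s <= t -> 2 * c <= 2 * a + t. Proof. lia. Qed.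

Lemma ex_sub (T : finType) n (A : {set T}) m : #|A| = n -> m <= n ->
  exists2 A' : {set T}, A' \subset A & #|A'| = m.
Proof.
elim: n A => [|n IH] A cA mn.
  by exists (set0 : {set T}); rewrite ?sub0set ?cards0 //; move: mn; rewrite leqn0 => /eqP.
case: (eqVneq m n.+1) => [->|mn']; first by exists A.
have [a aA] : exists a, a \in A by apply/card_gt0P; rewrite cA.
have cA' : #|A :\ a| = n by move: cA; rewrite (cardsD1 a A) aA add1n => -[].
have mn2 : m <= n by move: mn mn'; rewrite leq_eqVlt => /orP [/eqP->|]; rewrite ?eqxx.
have [A' sA' cA''] := IH (A :\ a) cA' mn2.
by exists A' => //; apply: subset_trans sA' (subD1set _ _).
Qed.


Section Main.
Variable v : nat.
Variables B P : {set {set 'I_v}}.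
Hypothesis Bsz : forall b, b \in B -> #|b| = 4.
Hypothesis Bpair : forall x y : 'I_v, x != y ->
     #|[set b in B | (x \in b) && (y \in b)]| <= 1.
Hypothesis PB : P \subset B.
Hypothesis Pdisj : forall b1 b2, b1 \in P -> b2 \in P -> b1 != b2 -> [disjoint b1 & b2].
Hypothesis Pmax : forall P', is_PPC B P' -> #|P'| <= #|P|.

Lemma blk_eq b1 b2 x y : b1 \in B -> b2 \in B -> x != y ->
  x \in b1 -> y \in b1 -> x \in b2 -> y \in b2 -> b1 = b2.
Proof.
move=> b1B b2B xy xb1 yb1 xb2 yb2.
have /card_le1_eqP H := Bpair xy.
by apply: H; rewrite inE ?b1B ?b2B /= ?xb1 ?yb1 ?xb2 ?yb2.
Qed.

Lemma Peq p1 p2 x : p1 \in P -> p2 \in P -> x \in p1 -> x \in p2 -> p1 = p2.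
Proof.
move=> p1P p2P x1 x2; apply/eqP; apply: contraT => ne.
by have := Pdisj p1P p2P ne => /disjP /(_ x x1 x2).
Qed.

Lemma Bne0 b : b \in B -> exists x, x \in b.
Proof. by move=> bB; apply/card_gt0P; rewrite Bsz. Qed.

Definition U := cover P.

Lemma inU x : reflect (exists2 p, p \in P & x \in p) (x \in U).
Proof. exact: bigcupP. Qed.

Lemma swap (Q M : {set {set 'I_v}}) : Q \subset P -> M \subset B ->
  (forall b1 b2, b1 \in M -> b2 \in M -> b1 != b2 -> [disjoint b1 & b2]) ->
  (forall b p, b \in M -> p \in P :\: Q -> [disjoint b & p]) -> #|M| <= #|Q|.
Proof.
move=> QP MB Mdj MPdj.
pose P' := (P :\: Q) :|: M.
have dj : [disjoint P :\: Q & M].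
  apply/disjP => b bPQ bM; have := MPdj b b bM bPQ.
  have [x xb] := Bne0 (subsetP MB b bM).
  by move/disjP/(_ x xb xb).
have ppc : is_PPC B P'.
  split.
    apply/subsetP => b; rewrite inE => /orP [|/(subsetP MB)//].
    by rewrite inE => /andP [_ /(subsetP PB)].
  move=> b1 b2; rewrite !inE => /orP [] h1 /orP [] h2 ne.
  - by case/andP: h1 => _ h1; case/andP: h2 => _ h2; apply: Pdisj.
  - by rewrite disjoint_sym; apply: MPdj => //; rewrite inE.
  - by apply: MPdj => //; rewrite inE.
  - by apply: Mdj.
have := Pmax ppc.
rewrite /P' cardsU (disjoint_setI0 dj) cards0 cardsD (setIidPr QP).
have := subset_leq_card QP; lia.
Qed.


Lemma pU p x : p \in P -> x \in p -> x \in U.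
Proof. by move=> pP xp; apply/inU; exists p. Qed.

Definition ldset (p : {set 'I_v}) (h : 'I_v) := [set b in B | (b :&: U \subset p) && (h \in b)].
Definition ld (p : {set 'I_v}) (h : 'I_v) := #|ldset p h|.

Lemma loc_onlyh p h b x : p \in P -> b \in B -> b :&: U \subset p -> b != p ->
  h \in b -> h \in p -> x \in b -> x \in U -> x = h.
Proof.
move=> pP bB bU bp hb hp xb xU; apply/eqP; apply: contraT => xh.
have xp : x \in p by apply: (subsetP bU); rewrite inE xb xU.
have e : b = p by apply: (blk_eq bB (subsetP PB p pP) xh).
by rewrite e eqxx in bp.
Qed.

Lemma kill h (S : {set 'I_v}) (F : {set {set 'I_v}}) : h \notin S -> F \subset B ->
  (forall b, b \in F -> h \in b /\ exists2 x, x \in b & x \in S) -> #|F| <= #|S|.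
Proof.
move=> hS FB Fh.
pose g x := odflt set0 [pick b in B | (h \in b) && (x \in b)].
apply: (leq_trans _ (leq_imset_card g S)); apply: subset_leq_card.
apply/subsetP => b bF; have [hb [x xb xS]] := Fh b bF.
apply/imsetP; exists x => //; rewrite /g.
case: pickP => [b' /andP [b'B /andP [hb' xb']]|/(_ b)]; last first.
  by rewrite (subsetP FB b bF) hb xb.
have hx : h != x by apply: contraNneq hS => ->.
by apply/esym; apply: (blk_eq b'B (subsetP FB b bF) hx).
Qed.

Lemma cardDU b : b \in B -> ~~ [disjoint b & U] -> #|b :\: U| <= 3.
Proof.
move=> bB nd; rewrite cardsD Bsz //.
suff : 0 < #|b :&: U| by lia.
rewrite card_gt0; apply: contra nd => /eqP e.
apply/disjP => x xb xU; have : x \in b :&: U by rewrite inE xb xU.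
by rewrite e inE.
Qed.


Lemma claimC c : c \in B ->
  (forall p, p \in P -> ~~ [disjoint p & c] -> exists2 h, h \in p :\: c & 13 < ld p h) -> False.
Proof.
move=> cB Hc.
pose Q := [set p in P | ~~ [disjoint p & c]].
have QP : Q \subset P by apply/subsetP => p; rewrite inE => /andP [].
pose hp p := [pick h in p :\: c | 13 < ld p h].
have hpS : forall q, q \in Q -> exists h, [/\ hp q = Some h, h \in q, h \notin c & 13 < ld q h].
  move=> q; rewrite inE => /andP [qP nd]; have [h hqc hl] := Hc q qP nd.
  rewrite /hp; case: pickP => [h' /andP [] | /(_ h)]; last by rewrite hqc hl.
  by rewrite inE => /andP [h'c h'q] hl'; exists h'.
pose Cand (q : {set 'I_v}) := [set b in B | [&& b :&: U \subset q, b != q &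
   (if hp q is Some h then h \in b else false)]].
have Q4 : #|Q| <= 4.
  pose f x := odflt set0 [pick p in P | x \in p].
  rewrite -(Bsz cB); apply: (leq_trans _ (leq_imset_card f c)); apply: subset_leq_card.
  apply/subsetP => p; rewrite inE => /andP [pP /ndisjP [x xp xc]].
  apply/imsetP; exists x => //; rewrite /f.
  case: pickP => [p' /andP [p'P xp']|/(_ p)]; last by rewrite pP xp.
  by apply: (Peq pP p'P xp xp').
have CandB q : Cand q \subset B by apply/subsetP => b; rewrite inE => /andP [].
have CandU q b x : b \in Cand q -> x \in b -> x \in U -> x \in q.
  rewrite inE => /andP [bB /and3P [bU _ _]] xb xU; apply: (subsetP bU); by rewrite inE xb xU.
have Candh q h b x : q \in Q -> hp q = Some h -> b \in Cand q -> x \in b -> x \in U -> x = h.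
  move=> qQ hq; rewrite inE hq => /andP [bB /and3P [bU bq hb]] xb xU.
  have [h' [hq' hin _ _]] := hpS q qQ; move: hq' hin; rewrite hq => -[<-] hin.
  exact: (loc_onlyh (subsetP QP q qQ) bB bU bq hb hin xb xU).
have Cand13 q : q \in Q -> 13 <= #|Cand q|.
  move=> qQ; have [h [hq hin hc hl]] := hpS q qQ.
  have e : ldset q h = q |: Cand q.
    apply/setP => b; rewrite !inE hq; case: (eqVneq b q) => [->|bq] /=.
      by rewrite (subsetP PB q (subsetP QP q qQ)) hin subsetIl.
    by [].
  move: hl; rewrite /ld e cardsU1; exact: ar_a.
have ind : forall n (Q' : {set {set 'I_v}}), Q' \subset Q -> #|Q'| = n ->
  exists N : {set {set 'I_v}}, [/\ N \subset B, #|N| = n,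
     (forall b1 b2, b1 \in N -> b2 \in N -> b1 != b2 -> [disjoint b1 & b2]),
     (forall b, b \in N -> [disjoint b & c] /\ exists2 q, q \in Q' & b \in Cand q) &
     #|(\bigcup_(d in N) d) :\: U| <= 3 * n].
  elim=> [|n IH] Q' Q'Q cQ'.
    exists set0; split; rewrite ?sub0set ?cards0 //; try by move=> ?; rewrite inE.
    by rewrite big_set0 set0D cards0.
  have [q qQ'] : exists q, q \in Q' by apply/card_gt0P; rewrite cQ'.
  have qQ := subsetP Q'Q q qQ'.
  have qP := subsetP QP q qQ.
  have sQ : Q' :\ q \subset Q by apply: subset_trans (subD1set _ _) Q'Q.
  have cQ'' : #|Q' :\ q| = n by move: cQ'; rewrite (cardsD1 q Q') qQ'; exact: ar_b.
  have [N [NB cN Ndj NcQ NW]] := IH (Q' :\ q) sQ cQ''.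
  have Nc b : b \in N -> [disjoint b & c] by case/NcQ.
  have NQ b : b \in N -> exists2 q', q' \in Q' :\ q & b \in Cand q' by case/NcQ.
  have n3 : n <= 3.
    have : Q' :\ q \subset Q :\ q by apply: setSD.
    move/subset_leq_card; move: Q4; rewrite (cardsD1 q Q) qQ cQ''; exact: ar_c.
  have [h [hq hin hc hl]] := hpS q qQ.
  pose W := \bigcup_(d in N) d.
  have hW : h \notin W.
    apply/bigcupP => -[d dN hd]; have [q' q'Q' dC] := NQ d dN.
    have hq' := CandU q' d h dC hd (pU qP hin).
    move: q'Q'; rewrite !inE => /andP [q'q q'Q'].
    have q'P := subsetP QP q' (subsetP Q'Q q' q'Q').
    by move/eqP: q'q; apply; apply: (Peq q'P qP hq' hin).
  pose K := [set b in Cand q | ~~ [disjoint b & c :|: W]].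
  have K12 : #|K| <= 12.
    apply: (@leq_trans #|(c :|: W) :\: U|).
      apply: (kill (h:=h)).
      - by rewrite inE (pU qP hin).
      - by apply/subsetP => b; rewrite inE => /andP [/(subsetP (CandB q))].
      move=> b; rewrite inE => /andP [bC /ndisjP [x xb xcW]].
      split; first by move: bC; rewrite inE hq => /andP [_ /and3P [_ _]].
      exists x => //; rewrite inE xcW andbT; apply/negP => xU.
      have xh := Candh q h b x qQ hq bC xb xU; subst x.
      by move: xcW; rewrite inE (negbTE hc) (negbTE hW).
    rewrite setDUl cardsU.
    have : #|c :\: U| <= 3.
      apply: cardDU => //; move: qQ; rewrite inE => /andP [_ /ndisjP [x xq xc]].
      by apply/ndisjP; exists x => //; apply: pU qP xq.
    move: NW; rewrite -/W; exact: ar_d.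
  have [b bC bK] : exists2 b, b \in Cand q & b \notin K.
    have : 0 < #|Cand q :\: K|.
      rewrite cardsD; have := Cand13 q qQ.
      have : #|Cand q :&: K| <= #|K| by apply: subset_leq_card; apply: subsetIr.
      exact: ar_e.
    by case/card_gt0P => b; rewrite inE => /andP [bK bC]; exists b.
  have bdj : [disjoint b & c :|: W] by move: bK; rewrite inE bC /= negbK.
  have bB : b \in B := subsetP (CandB q) b bC.
  have bc : [disjoint b & c] by apply: disjointWr bdj; apply: subsetUl.
  have bW : [disjoint b & W] by apply: disjointWr bdj; apply: subsetUr.
  have bN : b \notin N.
    apply/negP => bN; have [x xb] := Bne0 bB.
    move/disjP: bW => H; apply: (H x xb); rewrite /W; apply/bigcupP; by exists b.
  exists (b |: N); split.
  - by apply/subsetP => d; rewrite !inE => /orP [/eqP->|/(subsetP NB)].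
  - by rewrite cardsU1 bN cN.
  - move=> b1 b2; rewrite !inE => /orP [/eqP->|b1N] /orP [/eqP->|b2N] ne.
    + by rewrite eqxx in ne.
    + by apply: disjointWr bW; apply: (bigcup_sup _ b2N).
    + by rewrite disjoint_sym; apply: disjointWr bW; apply: (bigcup_sup _ b1N).
    + exact: Ndj.
  - move=> d; rewrite !inE => /orP [/eqP->|dN]; first by split => //; exists q.
    split; first exact: Nc.
    have [q' q'Q' dC] := NQ d dN.
    by exists q' => //; move: q'Q'; rewrite inE => /andP [].
  have eW : \bigcup_(d in b |: N) d = b :|: W by rewrite big_setU1.
  rewrite eW setDUl cardsU.
  have : #|b :\: U| <= 3.
    apply: cardDU => //; apply/ndisjP; exists h; last by apply: pU qP hin.
    by move: bC; rewrite inE hq => /andP [_ /and3P [_ _]].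
  move: NW; rewrite -/W; exact: ar_f.
have [N [NB cN Ndj NcQ _]] := ind #|Q| Q (subxx Q) erefl.
have Nc b : b \in N -> [disjoint b & c] by case/NcQ.
have NQ b : b \in N -> exists2 q', q' \in Q & b \in Cand q' by case/NcQ.
have cN' : c \notin N.
  apply/negP => cN'; have [x xc] := Bne0 cB.
  by move/disjP: (Nc c cN') => H; apply: (H x xc xc).
have MB : c |: N \subset B.
  by apply/subsetP => d; rewrite !inE => /orP [/eqP->|/(subsetP NB)].
have Mdj : forall b1 b2, b1 \in c |: N -> b2 \in c |: N -> b1 != b2 -> [disjoint b1 & b2].
  move=> b1 b2; rewrite !inE => /orP [/eqP->|b1N] /orP [/eqP->|b2N] ne.
  - by rewrite eqxx in ne.
  - by rewrite disjoint_sym; apply: Nc.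
  - by apply: Nc.
  - exact: Ndj.
have MPdj : forall b p, b \in c |: N -> p \in P :\: Q -> [disjoint b & p].
  move=> b p; rewrite !inE => /orP [/eqP->|bN] /andP [pQ pP].
    by rewrite disjoint_sym; move: pQ; rewrite pP /= negbK.
  have [q qQ bC] := NQ b bN; apply/disjP => x xb xp.
  have xq := CandU q b x bC xb (pU pP xp).
  have e := Peq pP (subsetP QP q qQ) xp xq; subst p.
  by move: qQ pQ; rewrite !inE => /andP [-> ->].
have := swap QP MB Mdj MPdj; rewrite cardsU1 cN' cN /=.
by rewrite add1n ltnn.
Qed.


Definition Lset (p : {set 'I_v}) := [set b in B | b :&: U \subset p].

Lemma Lint p b1 b2 : p \in P -> b1 \in Lset p -> b2 \in Lset p -> ~~ [disjoint b1 & b2].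
Proof.
move=> pP; rewrite !inE => /andP [b1B b1U] /andP [b2B b2U]; apply/negP => dj.
have ne : b1 != b2.
  apply/negP => /eqP e; subst b2; have [x xb] := Bne0 b1B.
  by move/disjP: dj => H; apply: (H x xb xb).
have MB : [set b1; b2] \subset B.
  by apply/subsetP => d; rewrite !inE => /orP [] /eqP ->.
have Mdj : forall d1 d2, d1 \in [set b1; b2] -> d2 \in [set b1; b2] -> d1 != d2 ->
    [disjoint d1 & d2].
  move=> d1 d2; rewrite !inE => /orP [] /eqP -> /orP [] /eqP -> ne';
    rewrite ?eqxx // in ne'; by rewrite // disjoint_sym.
have MPdj : forall d p', d \in [set b1; b2] -> p' \in P :\: [set p] -> [disjoint d & p'].
  move=> d p'; rewrite !inE => dM /andP [p'p p'P].
  have [dB dU] : d \in B /\ d :&: U \subset p by case/orP: dM => /eqP ->.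
  apply/disjP => x xd xp'.
  have xp : x \in p by apply: (subsetP dU); rewrite inE xd (pU p'P xp').
  by move/eqP: p'p; apply; apply: (Peq p'P pP xp' xp).
have sp : [set p] \subset P by rewrite sub1set.
have := swap sp MB Mdj MPdj.
by rewrite cards1 cards2 ne.
Qed.

Lemma smallL p : p \in P -> (forall h, h \in p -> ld p h <= 13) -> #|Lset p| <= 13.
Proof.
move=> pP small.
have pL : p \in Lset p by rewrite inE (subsetP PB p pP) subsetIl.
case: (boolP [exists z in p, [forall b in Lset p, z \in b]]).
  case/exists_inP => z zp /forall_inP allz.
  apply: leq_trans (small z zp); apply: subset_leq_card; apply/subsetP => b bL.
  by move: (bL); rewrite !inE => /andP [-> ->]; rewrite allz.
move/exists_inPn => notstar.
pose cz z := odflt set0 [pick c in Lset p | z \notin c].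
have czP z : z \in p -> cz z \in Lset p /\ z \notin cz z.
  move=> zp; rewrite /cz; case: pickP => [c /andP [cL zc] //|none].
  have := notstar z zp; move/forall_inPn => [c cL zc].
  by have := none c; rewrite cL zc.
pose S := [set zw : 'I_v * 'I_v | (zw.1 \in p) && (zw.2 \in cz zw.1 :\: p)].
pose g (zw : 'I_v * 'I_v) := odflt set0 [pick b in B | (zw.1 \in b) && (zw.2 \in b)].
have S12 : #|S| <= 12.
  rewrite /S (card_pairs p (fun z => cz z :\: p)).
  apply: (@leq_trans (\sum_(z in p) 3)); last by rewrite sum_nat_const Bsz // (subsetP PB p pP).
  apply: leq_sum => z zp.
  have [czL zcz] := czP z zp.
  have czB : cz z \in B by move: czL; rewrite inE => /andP [].
  rewrite cardsD Bsz //; have := Lint pP czL pL; move/ndisjP => [w w1 w2].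
  by apply: ar_g; apply/card_gt0P; exists w; rewrite inE w1 w2.
have sub : Lset p \subset p |: (g @: S).
  apply/subsetP => b bL; rewrite !inE; case: (eqVneq b p) => //= bp.
  have bB : b \in B by move: bL; rewrite inE => /andP [].
  have [z zb zp] := ndisjP _ _ (Lint pP bL pL).
  have [czL zcz] := czP z zp.
  have [w wb wc] := ndisjP _ _ (Lint pP bL czL).
  have zw : z != w by apply/negP => /eqP e; move: wc; rewrite -e (negbTE zcz).
  have wp : w \notin p.
    apply/negP => wp.
    have e := blk_eq bB (subsetP PB p pP) zw zb wb zp wp.
    by rewrite e eqxx in bp.
  apply/imsetP; exists (z, w); first by rewrite inE /= zp inE wp wc.
  rewrite /g /=; case: pickP => [b' /andP [b'B /andP [zb' wb']]|/(_ b)]; last by rewrite bB zb wb.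
  by apply: (blk_eq bB b'B zw).
apply: leq_trans (subset_leq_card sub) _.
rewrite cardsU1; apply: leq_trans (leq_add (leq_b1 _) (leq_trans (leq_imset_card g S) S12)) _.
by [].
Qed.


Lemma center_uniq p h h' : p \in P -> h \in p -> h' \in p ->
  13 < ld p h -> 13 < ld p h' -> h = h'.
Proof.
move=> pP hp h'p hl h'l; apply/eqP; apply: contraT => hh'.
have pB := subsetP PB p pP.
have : 0 < #|ldset p h' :\ p|.
  move: h'l; rewrite /ld (cardsD1 p); case: (p \in ldset p h') => /=; lia.
case/card_gt0P => c; rewrite !inE => /andP [cp /andP [cB /andP [cU h'c]]].
have hc : h \notin c.
  apply/negP => hc; have e := blk_eq cB pB hh' hc h'c hp h'p.
  by rewrite e eqxx in cp.
exfalso; apply: (claimC cB) => p' p'P /ndisjP [x xp' xc].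
have xp : x \in p by apply: (subsetP cU); rewrite inE xc (pU p'P xp').
have e := Peq p'P pP xp' xp; subst p'.
by exists h => //; rewrite inE hc hp.
Qed.

Definition H := [set h | [exists p in P, (h \in p) && (13 < ld p h)]].
Definition Ps := [set p in P | [forall h in p, ld p h <= 13]].
Definition Pb := P :\: Ps.

Lemma noH_small b : b \in B -> [disjoint b & H] -> exists2 p, p \in Ps & ~~ [disjoint p & b].
Proof.
move=> bB bH.
case: (boolP [exists p in Ps, ~~ [disjoint p & b]]) => [/exists_inP [p pS nd]|/exists_inPn none].
  by exists p.
exfalso; apply: (claimC bB) => p pP nd.
have pS : p \notin Ps by apply/negP => /none; rewrite nd.
move: pS; rewrite inE pP /= => /forall_inPn [h hp]; rewrite -ltnNge => hl.
exists h => //; rewrite inE hp andbT; apply/negP => hb.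
move/disjP: bH => X; apply: (X h hb); rewrite inE; apply/exists_inP; exists p => //.
by rewrite hp hl.
Qed.


Lemma cover_card (Q : {set {set 'I_v}}) : Q \subset P -> #|cover Q| = 4 * #|Q|.
Proof.
move=> QP; rewrite mulnC; apply: (@card_uniform_partition _ 4).
  by move=> A AQ; apply: Bsz; apply: (subsetP PB); apply: (subsetP QP).
rewrite /partition eqxx /=; apply/andP; split.
  apply/trivIsetP => A A' AQ A'Q; apply: Pdisj; exact: (subsetP QP).
apply/negP => /(subsetP QP) /(subsetP PB) /Bsz; by rewrite cards0.
Qed.

Definition blkof (x : 'I_v) := odflt set0 [pick p in P | x \in p].

Lemma blkofP x p : p \in P -> x \in p -> blkof x = p.
Proof.
move=> pP xp; rewrite /blkof; case: pickP => [p' /andP [p'P xp']|/(_ p)].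
  by apply: (Peq p'P pP xp' xp).
by rewrite pP xp.
Qed.

Lemma HP h : h \in H -> [/\ blkof h \in P, h \in blkof h & 13 < ld (blkof h) h].
Proof.
rewrite inE => /exists_inP [p pP /andP [hp hl]].
by rewrite (blkofP pP hp).
Qed.

Lemma H_Pb : #|H| = #|Pb|.
Proof.
have inj : {in H &, injective blkof}.
  move=> h h' hH h'H e; have [bP hb hl] := HP hH; have [_ h'b h'l] := HP h'H.
  rewrite -e in h'b h'l; exact: (center_uniq bP hb h'b hl h'l).
suff e : blkof @: H = Pb by rewrite -e (card_in_imset inj).
apply/setP => p; apply/imsetP/idP.
  move=> [h hH ->]; have [bP hb hl] := HP hH.
  rewrite !inE bP andbT; apply/negP => /forall_inP /(_ h hb); by rewrite leqNgt hl.
rewrite !inE => /andP [pS pP]; move: pS; rewrite pP /= => /forall_inPn [h hp].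
rewrite -ltnNge => hl; exists h; last by rewrite (blkofP pP hp).
rewrite inE; apply/exists_inP; exists p => //; by rewrite hp hl.
Qed.

Lemma H_Ub : H \subset cover Pb.
Proof.
apply/subsetP => h hH; have [bP hb hl] := HP hH; apply/bigcupP; exists (blkof h) => //.
rewrite !inE bP andbT; apply/negP => /forall_inP /(_ h hb); by rewrite leqNgt hl.
Qed.

Lemma U_split x : x \in U -> (x \in cover Ps) || (x \in cover Pb).
Proof.
case/inU => p pP xp; case: (boolP (p \in Ps)) => pS.
  by apply/orP; left; apply/bigcupP; exists p.
by apply/orP; right; apply/bigcupP; exists p; rewrite // inE pS.
Qed.

Lemma PsP : Ps \subset P. Proof. by apply/subsetP => p; rewrite inE => /andP []. Qed.
Lemma PbP : Pb \subset P. Proof. exact: subsetDl. Qed.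
Lemma Pbs : #|Pb| + #|Ps| = #|P|.
Proof. by rewrite /Pb cardsD (setIidPr PsP); have := subset_leq_card PsP; lia. Qed.


Variable x0 : 'I_v.

Definition BH := [set b in B | ~~ [disjoint b & H]].
Definition mc (b : {set 'I_v}) := odflt x0 [pick h in b :&: H].

Lemma mcP b : b \in BH -> mc b \in b /\ mc b \in H.
Proof.
rewrite inE => /andP [_ /ndisjP [h hb hH]]; rewrite /mc; case: pickP => [h' |/(_ h)].
  by rewrite inE => /andP.
by rewrite inE hb hH.
Qed.

Lemma BH_count : 6 * #|BH| + #|H| * (#|H| - 1) <= 2 * (#|H| * (v - 1)).
Proof.
pose Q := [set bx : {set 'I_v} * 'I_v | (bx.1 \in BH) && (bx.2 \in bx.1 :\ mc bx.1)].
have cQ : #|Q| = #|BH| * 3.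
  rewrite /Q (card_pairs BH (fun b => b :\ mc b)) -sum_nat_const; apply: eq_bigr => b bBH.
  have [m1 _] := mcP bBH; have bB : b \in B by move: bBH; rewrite inE => /andP [].
  apply: ar_i; by rewrite -(Bsz bB) (cardsD1 (mc b) b) m1.
pose phi (bx : {set 'I_v} * 'I_v) := (mc bx.1, bx.2).
have inj : {in Q &, injective phi}.
  move=> [b x] [b' x']; rewrite !inE /= => /andP [bH /andP [xm xb]] /andP [b'H /andP [x'm x'b]].
  move=> [e1 e2]; subst x'.
  have bB : b \in B by case/andP: bH.
  have b'B : b' \in B by case/andP: b'H.
  have bBH : b \in BH by rewrite inE.
  have b'BH : b' \in BH by rewrite inE.
  have [m1 _] := mcP bBH; have [m1' _] := mcP b'BH.
  rewrite -e1 in m1'.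
  by rewrite (blk_eq bB b'B xm xb m1 x'b m1').
pose Off := [set hx : 'I_v * 'I_v | (hx.1 \in H) && (hx.2 \in [set~ hx.1])].
have cOff : #|Off| = #|H| * (v - 1).
  rewrite /Off (card_pairs H (fun h => [set~ h])) -sum_nat_const; apply: eq_bigr => h _.
  by rewrite cardsC1 card_ord subn1.
pose HH := [set hx : 'I_v * 'I_v | (hx.1 \in H) && (hx.2 \in H :\ hx.1)].
have cHH : #|HH| = #|H| * (#|H| - 1).
  rewrite /HH (card_pairs H (fun h => H :\ h)) -sum_nat_const; apply: eq_bigr => h hH.
  by rewrite (cardsD1 h H) hH /= add1n subn1.
pose Img := phi @: Q.
have ImgOff : Img \subset Off.
  apply/subsetP => p /imsetP [[b x] bxQ ->]; rewrite inE /= in bxQ.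
  case/andP: bxQ => bBH; rewrite in_setD1 => /andP [xm _].
  by have [_ m2] := mcP bBH; rewrite inE /= m2 in_setC1 xm.
have HHOff : HH \subset Off.
  by apply/subsetP => -[x y]; rewrite !inE /= => /andP [-> /andP [-> _]].
pose S := Img :&: HH.
have half : 2 * #|S| <= #|HH|.
  apply: half_pairs; first exact: subsetIr.
    by move=> x y; rewrite !inE /= => /andP [xH /andP [yx yH]]; rewrite yH xH eq_sym yx.
  move=> x y; rewrite !inE => /andP [/imsetP [[b z] bzQ [e1 e2]] /andP [xH /andP [yx yH]]].
  move=> /andP [/imsetP [[b' z'] bzQ' [e1' e2']] _]; subst z z'.
  move: bzQ bzQ'; rewrite !inE /= => /andP [bH /andP [_ yb]] /andP [b'H /andP [_ xb']].
  have bB : b \in B by case/andP: bH.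
  have b'B : b' \in B by case/andP: b'H.
  have bBH : b \in BH by rewrite inE.
  have b'BH : b' \in BH by rewrite inE.
  have [m1 _] := mcP bBH; have [m1' _] := mcP b'BH.
  rewrite -e1 in m1; rewrite -e1' in m1'.
  have e := blk_eq bB b'B yx yb m1 m1' xb'; subst b'.
  by rewrite e1 -e1' eqxx in yx.
have dj : #|Img :|: (HH :\: Img)| <= #|Off|.
  apply: subset_leq_card; apply/subsetP => p; rewrite in_setU => /orP [/(subsetP ImgOff)//|].
  by rewrite in_setD => /andP [_ /(subsetP HHOff)].
move: dj; rewrite cardsU.
have -> : Img :&: (HH :\: Img) = set0.
  by apply/setP => p; rewrite in_setI in_setD in_set0; case: (p \in Img); rewrite ?andbF.
rewrite cards0 subn0 cardsD setIC -/S (card_in_imset inj) cQ cOff cHH => H1.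
move: half; rewrite cHH => half.
have := ar_h H1 half; lia.
Qed.


Definition Loc := [set b in B | [disjoint b & H] && [exists p in Ps, b :&: U \subset p]].
Definition Cr := [set b in B | [disjoint b & H] && ~~ [exists p in Ps, b :&: U \subset p]].

Lemma Loc_count : #|Loc| <= 13 * #|Ps|.
Proof.
pose LP := [set pb : {set 'I_v} * {set 'I_v} | (pb.1 \in Ps) && (pb.2 \in Lset pb.1)].
have cLP : #|LP| <= 13 * #|Ps|.
  rewrite /LP (card_pairs Ps Lset) mulnC -sum_nat_const; apply: leq_sum => p.
  rewrite inE => /andP [pP /forall_inP sm]; exact: smallL.
apply: leq_trans cLP; apply: leq_trans (leq_imset_card snd LP).
apply: subset_leq_card; apply/subsetP => b; rewrite inE => /andP [bB /andP [_ /exists_inP [p pS bU]]].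
apply/imsetP; exists (p, b) => //; by rewrite inE /= pS inE bB bU.
Qed.

Definition same (x y : 'I_v) := [exists p in P, (x \in p) && (y \in p)].

Lemma same_sym x y : same x y = same y x.
Proof. by apply/exists_inP/exists_inP => -[p pP /andP [a b]]; exists p; rewrite // a b. Qed.

Lemma same_refl x : x \in U -> same x x.
Proof. by case/inU => p pP xp; apply/exists_inP; exists p; rewrite // xp. Qed.

Lemma same_blk x y p : p \in P -> x \in p -> same x y = (y \in p).
Proof.
move=> pP xp; apply/exists_inP/idP => [[p' p'P /andP [xp' yp']]|yp].
  by rewrite -(Peq p'P pP xp' xp).
by exists p; rewrite // xp yp.
Qed.

Lemma Us_U x : x \in cover Ps -> x \in U.
Proof. by case/bigcupP => p pS xp; apply: (pU (subsetP PsP p pS) xp). Qed.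

Lemma Cr_count : 2 * #|Cr| <= 2 * (#|cover Ps| * #|cover Pb :\: H|) + #|cover Ps| * (#|cover Ps| - 4).
Proof.
pose Us := cover Ps; pose Ub := cover Pb.
pose Tf := [set xy : 'I_v * 'I_v | [&& xy.1 \in Us, xy.2 \in U, xy.2 \notin H & ~~ same xy.1 xy.2]].
pose pr (b : {set 'I_v}) := odflt (x0, x0) [pick xy in Tf | (xy.1 \in b) && (xy.2 \in b)].
have Tfne xy : xy \in Tf -> xy.1 != xy.2.
  rewrite inE => /and4P [xU _ _ ns]; apply: contraNneq ns => e.
  by rewrite -e; apply: same_refl; apply: Us_U.
have prP b : b \in Cr -> [/\ pr b \in Tf, (pr b).1 \in b & (pr b).2 \in b].
  rewrite inE => /andP [bB /andP [bH nloc]].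
  rewrite /pr; case: pickP => [xy /andP [xyT /andP [xb yb]] //|none].
  have [p pS /ndisjP [x xp xb]] := noH_small bB bH.
  have pP := subsetP PsP p pS.
  have : ~~ (b :&: U \subset p).
    by apply: contra nloc => sub; apply/exists_inP; exists p.
  case/subsetPn => y; rewrite inE => /andP [yb yU] yp.
  have := none (x, y); rewrite /= xb yb andbT inE /= yU.
  have -> : x \in Us by apply/bigcupP; exists p.
  have -> : y \notin H by apply/negP => yH; move/disjP: bH => X; apply: (X y yb yH).
  by rewrite (same_blk _ pP xp) yp.
have inj : {in Cr &, injective pr}.
  move=> b b' bC b'C e.
  have [T1 xb yb] := prP b bC; have [_ xb' yb'] := prP b' b'C.
  rewrite -e in xb' yb'.
  have bB : b \in B by move: bC; rewrite inE => /andP [].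
  have b'B : b' \in B by move: b'C; rewrite inE => /andP [].
  exact: (blk_eq bB b'B (Tfne _ T1) xb yb xb' yb').
pose Img := pr @: Cr.
pose T1 := setX Us (Ub :\: H).
pose T2 := [set xy : 'I_v * 'I_v | [&& xy.1 \in Us, xy.2 \in Us & ~~ same xy.1 xy.2]].
have ImgT : Img \subset T1 :|: T2.
  apply/subsetP => xy /imsetP [b bC ->]; have [T _ _] := prP b bC.
  move: T; case: (pr b) => x y; rewrite inE /= => /and4P [xU yU yH ns].
  case/orP: (U_split yU) => yS.
    by rewrite in_setU; apply/orP; right; rewrite inE /= xU yS.
  by rewrite in_setU; apply/orP; left; rewrite in_setX /= xU in_setD yH.
have cT2 : #|T2| = #|Us| * (#|Us| - 4).
  have -> : T2 = [set xy : 'I_v * 'I_v | (xy.1 \in Us) && (xy.2 \in [set y in Us | ~~ same xy.1 y])].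
    by apply/setP => -[x y]; rewrite !inE.
  rewrite (card_pairs Us (fun x => [set y in Us | ~~ same x y])) -sum_nat_const.
  apply: eq_bigr => x /bigcupP [p pS xp].
  have pP := subsetP PsP p pS.
  have -> : [set y in Us | ~~ same x y] = Us :\: p.
    by apply/setP => y; rewrite !inE (same_blk _ pP xp) andbC.
  have pU' : p \subset Us by apply: (bigcup_sup _ pS).
  by rewrite cardsD (setIidPr pU') (Bsz (subsetP PB p pP)).
pose S := Img :&: T2.
have half : 2 * #|S| <= #|T2|.
  apply: half_pairs; first exact: subsetIr.
    by move=> x y; rewrite !inE /= => /and3P [xU yU ns]; rewrite xU yU same_sym.
  move=> x y; rewrite !inE => /andP [/imsetP [b bC e] /and3P [xU _ ns]].
  move=> /andP [/imsetP [b' b'C e'] _].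
  have [T xb yb] := prP b bC; have [_ yb' xb'] := prP b' b'C.
  rewrite -e in xb yb T; rewrite -e' in yb' xb'.
  have bB : b \in B by move: bC; rewrite inE => /andP [].
  have b'B : b' \in B by move: b'C; rewrite inE => /andP [].
  have ne := Tfne _ T.
  have eb := blk_eq bB b'B ne xb yb xb' yb'; subst b'.
  by move: e'; rewrite -e => -[ex _]; rewrite ex eqxx in ne.
have : #|Img| <= #|T1| + #|S|.
  have -> : Img = (Img :&: T1) :|: S.
    apply/setP => p; rewrite /S -setIUr; apply/idP/idP => [pI|]; last by rewrite inE => /andP [].
    by rewrite inE pI (subsetP ImgT).
  rewrite cardsU; apply: leq_trans (leq_subr _ _) _; apply: leq_add => //.
  exact/subset_leq_card/subsetIr.
rewrite (card_in_imset inj) /T1 cardsX => H1.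
move: half; rewrite cT2 => half; exact: (ar_j H1 half).
Qed.


Lemma total_count : 0 < #|P| -> 27 * #|P| ^ 2 - 3 * #|P| + 60 <= 2 * v ->
  6 * #|B| + #|P| * (#|P| + 1) <= 2 * #|P| * v.
Proof.
move=> P0 hv.
have sub : B \subset BH :|: Loc :|: Cr.
  apply/subsetP => b bB; rewrite !in_setU.
  case: (boolP [disjoint b & H]) => bH.
    case: (boolP [exists p in Ps, b :&: U \subset p]) => e.
      by rewrite /Loc inE bB bH e orbT.
    by rewrite /Cr inE bB bH e orbT.
  by rewrite /BH inE bB bH.
have cBle : #|B| <= #|BH| + #|Loc| + #|Cr|.
  apply: leq_trans (subset_leq_card sub) _.
  apply: leq_trans (leq_card_setU _ _).1 _; rewrite leq_add2r.
  exact: (leq_card_setU _ _).1.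
have ePs : #|cover Ps| = 4 * #|Ps| by apply: cover_card; apply: PsP.
have ePb : #|cover Pb :\: H| = 4 * #|H| - #|H|.
  by rewrite cardsD (setIidPr H_Ub) (cover_card PbP) H_Pb.
have eP : #|P| = #|H| + #|Ps| by rewrite -Pbs H_Pb.
have h3 := Cr_count; rewrite ePs ePb in h3.
rewrite eP in P0 hv *.
have := ar_final BH_count Loc_count h3 hv P0.
move=> H2; apply: leq_trans H2; rewrite leq_add2r leq_mul2l /=.
exact: cBle.
Qed.

End Main.

Unset Implicit Arguments.

Theorem theorem3p22 (rho v : nat) (B : {set {set 'I_v}}) :
  0 < rho ->
  (27 * rho ^ 2 - 3 * rho + 60 <= 2 * v)%N ->
  is_packing 4 B ->
  max_PPC_size B rho ->
  (#|B|%:R <= (rho%:R * v%:R / 3 - rho%:R * (rho%:R + 1) / 6 : rat))%R.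
Proof.
move=> r0 hv [Bsz Bpair] [[P [[PB Pdisj] cP]] nomore].
have Pmax : forall P', is_PPC B P' -> (#|P'| <= #|P|)%N.
  move=> P' [P'B P'dj]; rewrite cP leqNgt; apply/negP => lt.
  have [P'' sub c''] := ex_sub (erefl #|P'|) lt.
  apply: nomore; exists P''; split => //; split.
    exact: subset_trans sub P'B.
  by move=> b1 b2 b1P b2P; apply: P'dj; apply: (subsetP sub).
have [p pP] : exists p, p \in P by apply/card_gt0P; rewrite cP.
have [x0 _] : exists x0 : 'I_v, x0 \in p.
  by apply/card_gt0P; rewrite Bsz // (subsetP PB).
have := total_count Bsz Bpair PB Pdisj Pmax x0; rewrite cP => /(_ r0 hv) hn.
have hq : ((6 * #|B| + rho * (rho + 1))%:R <= (2 * rho * v)%:R :> rat)%R by rewrite ler_nat.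
rewrite !natrD !natrM in hq.
lra.
Qed.
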